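(* Let $\rho\in(0,1)$ and let $S\in\mathbb{R}^{m\times n}$ be such that the event $\mathcal{E}^m_\rho$ holds, i.e. $\|C_S-I_d\|_2\leqslant\sqrt{\rho}$. Then for every $x\in\mathbb{R}^d$, $|\delta_x-\widetilde\delta_x|\leqslant\sqrt{\rho}\,\widetilde\delta_x$. Consequently, if $S$ is drawn from a random embedding with critical sketch size $m_\delta$ (for a given $\delta\in(0,1)$) and $m>m_\delta$, then with probability at least $1-\delta$ we have $|\delta_x-\widetilde\delta_x|\leqslant\sqrt{m_\delta/m}\,\widetilde\delta_x$ for all $x\in\mathbb{R}^d$.
   Context: Let $A\in\mathbb{R}^{n\times d}$ with $n\geqslant d$, $b\in\mathbb{R}^d$, $\Lambda\in\mathbb{R}^{d\times d}$ diagonal with $\Lambda\succeq I_d$, and $\nu>0$. Set $H=A^\top A+\nu^2\Lambda$, $f(x)=\frac12 x^\top Hx-b^\top x$ and $x^*=H^{-1}b$. For $S\in\mathbb{R}^{m\times n}$ set $H_S=A^\top S^\top SA+\nu^2\Lambda$ and $C_S=H^{-1/2}H_SH^{-1/2}$. For $x\in\mathbb{R}^d$ let $\delta_x=\frac12\|x-x^*\|_H^2$ (with $\|z\|_H^2=z^\top Hz$) and $\widetilde\delta_x=\frac12\nabla f(x)^\top H_S^{-1}\nabla f(x)$. For $\rho>0$, $\mathcal{E}^m_\rho$ denotes the event $\|C_S-I_d\|_2\leqslant\max\{\sqrt\rho,\rho\}$. A random embedding is a family of distributions of random matrices $S\in\mathbb{R}^{m\times n}$, one for each $m\geqslant1$;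 given $\delta\in(0,1)$ its critical sketch size is $m_\delta=\inf\{k\geqslant1:\ \mathbb{P}(\mathcal{E}^m_\rho)\geqslant1-\delta \text{ for all } \rho>0 \text{ and all } m\geqslant k/\rho\}$. *)

(* Defs.v *)
From HB Require Import structures.
From mathcomp Require Import all_boot all_order all_algebra.
From mathcomp Require Import all_classical all_reals all_analysis.
From Stdlib Require Import ClassicalEpsilon.

Set Implicit Arguments.
Unset Strict Implicit.
Unset Printing Implicit Defensive.

Import Order.TTheory GRing.Theory Num.Theory.
Local Open Scope classical_set_scope.
Local Open Scope ring_scope.

Definition quadf (R : realType) (d : nat) (M : 'M[R]_d) (v : 'cV[R]_d) : R :=
  (v^T *m M *m v) 0 0.

Definition enorm (R : realType) (k : nat) (v : 'cV[R]_k) : R :=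
  Num.sqrt (\sum_(i < k) v i 0 ^+ 2).

Definition specnorm (R : realType) (p q : nat) (M : 'M[R]_(p, q)) : R :=
  sup [set enorm (M *m v) | v in [set v : 'cV[R]_q | enorm v = 1]].

Definition posdefmx (R : realType) (d : nat) (M : 'M[R]_d) : Prop :=
  forall v : 'cV[R]_d, v != 0 -> 0 < quadf M v.

Definition invsqrtmx (R : realType) (d : nat) (H : 'M[R]_d) : 'M[R]_d :=
  epsilon (inhabits 0)
    (fun P : 'M[R]_d => P^T = P /\ posdefmx P /\ P *m P = invmx H).

Definition Hmat (R : realType) (n d : nat) (A : 'M[R]_(n, d))
  (Lam : 'M[R]_d) (nu : R) : 'M[R]_d :=
  A^T *m A + (nu ^+ 2) *: Lam.

Definition HSmat (R : realType) (m n d : nat) (S : 'M[R]_(m, n))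
  (A : 'M[R]_(n, d)) (Lam : 'M[R]_d) (nu : R) : 'M[R]_d :=
  A^T *m S^T *m S *m A + (nu ^+ 2) *: Lam.

Definition CSmat (R : realType) (m n d : nat) (S : 'M[R]_(m, n))
  (A : 'M[R]_(n, d)) (Lam : 'M[R]_d) (nu : R) : 'M[R]_d :=
  let Hm := invsqrtmx (Hmat A Lam nu) in Hm *m HSmat S A Lam nu *m Hm.

Definition fobj (R : realType) (n d : nat) (A : 'M[R]_(n, d)) (b : 'cV[R]_d)
  (Lam : 'M[R]_d) (nu : R) (x : 'cV[R]_d) : R :=
  2^-1 * quadf (Hmat A Lam nu) x - (b^T *m x) 0 0.

(* gradient of f (H is symmetric): H x - b *)
Definition gradf (R : realType) (n d : nat) (A : 'M[R]_(n, d)) (b : 'cV[R]_d)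
  (Lam : 'M[R]_d) (nu : R) (x : 'cV[R]_d) : 'cV[R]_d :=
  Hmat A Lam nu *m x - b.

Definition xstar (R : realType) (n d : nat) (A : 'M[R]_(n, d)) (b : 'cV[R]_d)
  (Lam : 'M[R]_d) (nu : R) : 'cV[R]_d :=
  invmx (Hmat A Lam nu) *m b.

Definition delta_x (R : realType) (n d : nat) (A : 'M[R]_(n, d)) (b : 'cV[R]_d)
  (Lam : 'M[R]_d) (nu : R) (x : 'cV[R]_d) : R :=
  2^-1 * quadf (Hmat A Lam nu) (x - xstar A b Lam nu).

Definition delta_t (R : realType) (m n d : nat) (S : 'M[R]_(m, n))
  (A : 'M[R]_(n, d)) (b : 'cV[R]_d) (Lam : 'M[R]_d) (nu : R)
  (x : 'cV[R]_d) : R :=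
  2^-1 * quadf (invmx (HSmat S A Lam nu)) (gradf A b Lam nu x).

Definition eventE (R : realType) (m n d : nat) (S : 'M[R]_(m, n))
  (A : 'M[R]_(n, d)) (Lam : 'M[R]_d) (nu : R) (rho : R) : Prop :=
  specnorm (CSmat S A Lam nu - 1%:M) <= Num.max (Num.sqrt rho) rho.

(* critical sketch size of a random embedding (S m : Omega -> 'M_(m,n))_m
   on the probability space (Omega, P); value in the extended reals
   (+oo if the defining set is empty). *)
Definition crit_size (R : realType) (n d : nat) (A : 'M[R]_(n, d))
  (Lam : 'M[R]_d) (nu : R) (d0 : measure_display) (Omega : measurableType d0)
  (P : probability Omega R) (S : forall m : nat, Omega -> 'M[R]_(m, n))
  (delta : R) : \bar R :=
  ereal_inf [set k%:E | k in [set k : R | 1 <= k /\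
     forall rho : R, 0 < rho -> forall m : nat, (0 < m)%N -> k / rho <= m%:R ->
       ((1 - delta)%:E <= P [set w | eventE (S m w) A Lam nu rho])%E]].

(* Main.v *)
Require Import Defs.
From HB Require Import structures.
From mathcomp Require Import all_boot all_order all_algebra.
From mathcomp Require Import all_classical all_reals all_analysis.
From mathcomp Require Import complex spectral sesquilinear.
From mathcomp Require Import ring lra.
From Stdlib Require Import ClassicalEpsilon.

Import Order.TTheory GRing.Theory Num.Theory.
Set Implicit Arguments.
Unset Strict Implicit.
Unset Printing Implicit Defensive.
Local Open Scope ring_scope.
Lemma interp (R : fieldType) (s : seq R) (f : R -> R) :
  exists p : {poly R}, forall y, y \in s -> p.[y] = f y.
Proof.
elim: s => [|y s [p Hp]]; first by exists 0.
have [ys|yns] := boolP (y \in s).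
  by exists p => z; rewrite inE => /orP[/eqP->|]; apply: Hp.
pose q := \prod_(z <- s) ('X - z%:P).
have qy : q.[y] != 0 by rewrite -/(root q y) root_prod_XsubC.
exists (p + ((f y - p.[y]) / q.[y]) *: q) => z.
rewrite inE hornerD hornerZ => /orP[/eqP->|zs].
  by rewrite divfK // addrC subrK.
have /rootP -> : root q z by rewrite root_prod_XsubC.
by rewrite mulr0 addr0 Hp.
Qed.

Section Sqrt.
Variable R : realType.
Local Notation toC := (real_complex R).

Lemma vvT_ge0 n (v : 'rV[R]_n) : 0 <= (v *m v^T) 0 0.
Proof.
rewrite mxE; apply: sumr_ge0 => i _; rewrite mxE -expr2; exact: sqr_ge0.
Qed.

Lemma posdef_det n (M : 'M[R]_n) (x : R) :
  posdefmx M -> \det (M - x%:M) = 0 -> 0 < x.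
Proof.
move=> PD /eqP /det0P [v v0 vM].
have vME : v *m M = x *: v.
  by apply/eqP; rewrite -subr_eq0 -mul_mx_scalar -mulmxBr vM.
have : 0 < quadf M v^T.
  apply: PD; apply: contra v0 => /eqP h; apply/eqP.
  by rewrite -[v]trmxK h trmx0.
rewrite /quadf trmxK vME -scalemxAl mxE.
have := vvT_ge0 v; rewrite le_eqVlt => /orP[/eqP<-|]; first by rewrite mulr0 ltxx.
move=> h1 h2; rewrite -(pmulr_lgt0 _ h1) //.
Qed.
Lemma trmx_horner n (M : 'M[R]_n.+1) p : M^T = M -> (horner_mx M p)^T = horner_mx M p.
Proof.
move=> MT; elim/poly_ind: p => [|p c IH]; first by rewrite rmorph0 trmx0.
rewrite !(rmorphD, rmorphM) /= horner_mx_X horner_mx_C linearD /= tr_scalar_mx.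
congr (_ + _); rewrite -[_ * _]/(_ *m _) trmx_mul IH MT.
by have := comm_mx_horner p (erefl (M *m M)).
Qed.

Lemma sqrt_ex n (M : 'M[R]_n.+1) : M^T = M -> posdefmx M ->
  exists Q : 'M[R]_n.+1, [/\ Q^T = Q, posdefmx Q & Q *m Q = M].
Proof.
move=> MT PD.
pose Mc := map_mx toC M.
have Mh : Mc \is hermsymmx.
  apply: realsym_hermsym.
    by apply/is_hermitianmxP; rewrite expr0 scale1r map_mx_id // map_trmx MT.
  by apply/mxOverP => i j; rewrite mxE; apply/complex_realP; exists (M i j).
set U := spectralmx Mc; set D := spectral_diag Mc.
have McE : Mc = invmx U *m diag_mx D *m U.
  by apply/orthomx_spectralP/hermitian_normalmx.
have Uu : U \in unitmx := spectral_unit Mc.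
have Dr : forall i, D 0 i = ((complex.Re (D 0 i))%:C)%C.
  move=> i; rewrite RRe_real //; exact: (mxOverP (hermitian_spectral_diag_real Mh)).
pose x i := complex.Re (D 0 i).
have xpos : forall i, 0 < x i.
  move=> i; apply: (posdef_det PD); apply: (@complexI R).
  rewrite -det_map_mx map_mxB map_scalar_mx /= -/Mc -Dr rmorph0.
  apply/eqP/det0P; exists (row i U).
    apply/eqP => ri0.
    have : row i (U *m invmx U) = 0 by rewrite row_mul ri0 mul0mx.
    rewrite mulmxV // => /rowP /(_ i); rewrite !mxE eqxx /= => /eqP.
    by rewrite oner_eq0.
  have UMc : U *m Mc = diag_mx D *m U by rewrite McE !mulmxA mulmxV // mul1mx.
  rewrite mulmxBr -row_mul UMc mul_diag_mx mul_mx_scalar.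
  by apply/rowP => j; rewrite !mxE subrr.
pose s := \row_i ((Num.sqrt (x i))%:C)%C.
have [p Hp] := interp [seq x i | i <- enum 'I_n.+1] Num.sqrt.
pose Q := horner_mx M p.
have QcE : map_mx toC Q = invmx U *m diag_mx s *m U.
  rewrite map_horner_mx.
  rewrite -/Mc.
  rewrite McE.
  rewrite (horner_mx_uconjC _ _ Uu).
  rewrite horner_mx_diag.
  suff -> : (D ^ horner (map_poly toC p))%sesqui = s by [].
  apply/rowP => i; rewrite !mxE.
  rewrite [D 0 i]Dr horner_map /= Hp //.
  by apply: map_f; rewrite mem_enum.
exists Q; split.
- exact: trmx_horner.
- move=> v v0.
  pose vc := map_mx toC v.
  have vc0 : vc != 0.
    apply: contra v0 => /eqP h; apply/eqP; apply: (@map_mx_inj _ _ toC).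
    by rewrite -/vc h map_mx0.
  pose w := U *m vc.
  have w0 : w != 0.
    by apply: contra vc0 => /eqP w0; rewrite -(mulKmx Uu vc) -/w w0 mulmx0.
  have vcr : (vc^T ^ Num.Def.conjC)%sesqui = vc^T.
    apply/matrixP => i j; rewrite !mxE; apply: conj_Creal.
    by apply/complex_realP; exists (v j i).
  have key : toC (quadf Q v) = \sum_j (s 0 j * (`|w j 0| ^+ 2)).
    rewrite /quadf.
    have -> : toC ((v^T *m Q *m v) 0 0) = (map_mx toC (v^T *m Q *m v)) 0 0.
      by rewrite [RHS]mxE.
    rewrite !map_mxM -map_trmx QcE -/vc invmx_unitary ?spectral_unitarymx //.
    have E1 : vc^T *m (U ^t Num.Def.conjC)%sesqui = ((w^T) ^ Num.Def.conjC)%sesqui.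
      by rewrite /w trmx_mul map_mxM vcr.
    rewrite !mulmxA E1 mul_mx_diag -mulmxA -/w mxE.
    apply: eq_bigr => j _; rewrite !mxE normCK.
    by ring.
  have [j wj] : exists j, w j 0 != 0.
    case: (pickP (fun j => w j 0 != 0)) => [j wj|H]; first by exists j.
    move: w0; have -> : w = 0; last by rewrite eqxx.
    by apply/matrixP => i k; rewrite ord1 [RHS]mxE; move: (H i) => /= /negbFE /eqP.
  have sge0 : forall i, 0 <= s 0 i.
    by move=> i; rewrite mxE ler0c sqrtr_ge0.
  have : 0 < toC (quadf Q v).
    rewrite key (bigD1 j) //=.
    apply: (@lt_le_trans _ _ (s 0 j * `|w j 0| ^+ 2)).
      apply: mulr_gt0; last by rewrite exprn_gt0 // normr_gt0.
      by rewrite mxE -[0 : R[i]]/((0:R)%:C)%C ltcR sqrtr_gt0.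
    rewrite lerDl; apply: sumr_ge0 => i _; apply: mulr_ge0 => //.
  by move=> h; rewrite -ltcR; exact: h.
- apply: (@map_mx_inj _ _ toC); rewrite map_mxM QcE -/Mc McE.
  rewrite -!mulmxA (mulmxA U) mulmxV // mul1mx.
  rewrite (mulmxA (diag_mx s)) mulmx_diag.
  suff -> : \row_j (s 0 j * s 0 j) = D by [].
  apply/rowP => i; rewrite !mxE [D 0 i]Dr -rmorphM /=.
  by rewrite -expr2 sqr_sqrtr // ltW.
Qed.
End Sqrt.

Lemma sqrt_exists (R : realType) n (M : 'M[R]_n) : M^T = M -> posdefmx M ->
  exists Q : 'M[R]_n, [/\ Q^T = Q, posdefmx Q & Q *m Q = M].
Proof.
case: n M => [|n] M; last exact: sqrt_ex.
move=> MT PD; exists M; split => //; last by rewrite [LHS]flatmx0 [RHS]flatmx0.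
Qed.
Local Open Scope classical_set_scope.
Local Open Scope ring_scope.

Section LA.
Variable R : realType.

Definition dot n (u v : 'cV[R]_n) := (u^T *m v) 0 0.

Lemma dotC n (u v : 'cV[R]_n) : dot u v = dot v u.
Proof.
rewrite /dot; transitivity ((u^T *m v)^T 0 0); first by rewrite [RHS]mxE.
by rewrite trmx_mul trmxK.
Qed.

Lemma dot_sqr n (u : 'cV[R]_n) : dot u u = \sum_i u i 0 ^+ 2.
Proof. by rewrite /dot mxE; apply: eq_bigr => i _; rewrite mxE expr2. Qed.

Lemma dot_ge0 n (u : 'cV[R]_n) : 0 <= dot u u.
Proof. by rewrite dot_sqr; apply: sumr_ge0 => i _; exact: sqr_ge0. Qed.

Lemma dot_eq0 n (u : 'cV[R]_n) : dot u u = 0 -> u = 0.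
Proof.
rewrite dot_sqr => /psumr_eq0P H.
apply/matrixP => i j; rewrite ord1 mxE.
have /eqP := H (fun _ _ => sqr_ge0 _) i isT.
by rewrite sqrf_eq0 => /eqP.
Qed.

Lemma enormE n (u : 'cV[R]_n) : enorm u = Num.sqrt (dot u u).
Proof. by rewrite dot_sqr. Qed.

Lemma enorm_sqr n (u : 'cV[R]_n) : enorm u ^+ 2 = dot u u.
Proof. by rewrite enormE sqr_sqrtr // dot_ge0. Qed.

Lemma dot0r n (u : 'cV[R]_n) : dot u 0 = 0.
Proof. by rewrite /dot mulmx0 mxE. Qed.

Lemma dotE n (u v : 'cV[R]_n) : dot u v = \sum_i u i 0 * v i 0.
Proof. by rewrite /dot mxE; apply: eq_bigr => i _; rewrite mxE. Qed.

Lemma dotZZ n (a : R) (u : 'cV[R]_n) : dot (a *: u) (a *: u) = a ^+ 2 * dot u u.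
Proof.
by rewrite !dotE mulr_sumr; apply: eq_bigr => i _; rewrite mxE; ring.
Qed.

Lemma CS n (u v : 'cV[R]_n) : dot u v ^+ 2 <= dot u u * dot v v.
Proof.
have [->|vn0] := eqVneq v 0; first by rewrite dot0r dot0r expr0n mulr0.
have bpos : 0 < dot v v.
  rewrite lt_def dot_ge0 andbT; apply: contra vn0 => /eqP h.
  by apply/eqP; apply: dot_eq0.
have h := dot_ge0 (dot v v *: u - dot u v *: v).
have E : dot (dot v v *: u - dot u v *: v) (dot v v *: u - dot u v *: v) =
   dot v v * (dot v v * dot u u - dot u v ^+ 2).
  have gen : forall B Cc, dot (B *: u - Cc *: v) (B *: u - Cc *: v) =
     B ^+ 2 * dot u u - (2 * B * Cc) * dot u v + Cc ^+ 2 * dot v v.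
    move=> B Cc; rewrite (dotE u u) (dotE u v) (dotE v v).
    rewrite !mulr_sumr -sumrB -big_split /= dotE.
    by apply: eq_bigr => i _; rewrite !mxE; ring.
  rewrite gen.
  ring.
rewrite E pmulr_rge0 // subr_ge0 in h.
by rewrite mulrC.
Qed.

Lemma CS_abs n (u v : 'cV[R]_n) : `|dot u v| <= enorm u * enorm v.
Proof.
rewrite !enormE -sqrtrM ?dot_ge0 // -sqrtr_sqr.
by apply: ler_wsqrtr; exact: CS.
Qed.

Lemma enorm_ge0 n (u : 'cV[R]_n) : 0 <= enorm u.
Proof. exact: sqrtr_ge0. Qed.

Lemma enormZ n (a : R) (u : 'cV[R]_n) : enorm (a *: u) = `|a| * enorm u.
Proof. by rewrite !enormE dotZZ sqrtrM ?sqr_ge0 // sqrtr_sqr. Qed.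

Lemma enorm0 n : enorm (0 : 'cV[R]_n) = 0.
Proof. by rewrite enormE dot0r sqrtr0. Qed.

Lemma specnorm_ubound p q (E : 'M[R]_(p, q)) :
  has_ubound [set enorm (E *m v) | v in [set v : 'cV[R]_q | enorm v = 1]].
Proof.
exists (Num.sqrt (\sum_i dot (row i E)^T (row i E)^T)).
move=> _ [u /= u1 <-].
rewrite enormE; apply: ler_wsqrtr; rewrite dot_sqr.
apply: ler_sum => i _.
have -> : (E *m u) i 0 = dot (row i E)^T u.
  by rewrite /dot trmxK -row_mul [RHS]mxE.
apply: (le_trans (CS _ _)).
by rewrite -(enorm_sqr u) u1 expr1n mulr1.
Qed.

Lemma enorm_le_specnorm p q (E : 'M[R]_(p, q)) v :
  enorm (E *m v) <= specnorm E * enorm v.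
Proof.
have [->|vn0] := eqVneq v 0; first by rewrite mulmx0 !enorm0 mulr0.
have tpos : 0 < enorm v.
  rewrite enormE sqrtr_gt0 lt_def dot_ge0 andbT.
  by apply: contra vn0 => /eqP h; apply/eqP; apply: dot_eq0.
pose u := (enorm v)^-1 *: v.
have u1 : enorm u = 1 by rewrite enormZ ger0_norm ?invr_ge0 ?ltW // mulVf // gt_eqF.
have : enorm (E *m u) <= specnorm E.
  by apply: ub_le_sup; [exact: specnorm_ubound | exists u].
rewrite /u -scalemxAr enormZ ger0_norm; last by rewrite invr_ge0 ltW.
move=> h.
have := ler_wpM2l (ltW tpos) h.
by rewrite mulrA mulfV ?gt_eqF // mul1r mulrC.
Qed.

Lemma quad_bound k (E : 'M[R]_k) y : `|quadf E y| <= specnorm E * dot y y.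
Proof.
rewrite /quadf -mulmxA -/(dot y (E *m y)).
apply: (le_trans (CS_abs _ _)).
rewrite -enorm_sqr expr2 mulrCA.
by apply: ler_wpM2l; [exact: enorm_ge0 | exact: enorm_le_specnorm].
Qed.
End LA.
Local Open Scope classical_set_scope.
Local Open Scope ring_scope.

Section Det.
Variable R : realType.

Lemma quadf_dot k (M : 'M[R]_k) v : quadf M v = dot v (M *m v).
Proof. by rewrite /quadf /dot mulmxA. Qed.

Lemma quadfB k (M N : 'M[R]_k) v : quadf (M - N) v = quadf M v - quadf N v.
Proof. by rewrite /quadf mulmxBr mulmxBl !mxE. Qed.

Lemma quadfD k (M N : 'M[R]_k) v : quadf (M + N) v = quadf M v + quadf N v.
Proof. by rewrite /quadf mulmxDr mulmxDl !mxE. Qed.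

Lemma quadfZ k c (M : 'M[R]_k) v : quadf (c *: M) v = c * quadf M v.
Proof. by rewrite /quadf -scalemxAr -scalemxAl !mxE. Qed.

Lemma quadf1 k (v : 'cV[R]_k) : quadf 1%:M v = dot v v.
Proof. by rewrite /quadf mulmx1. Qed.

Lemma quadf_conj k l (M : 'M[R]_k) (P : 'M[R]_(k, l)) v :
  quadf (P^T *m M *m P) v = quadf M (P *m v).
Proof. by rewrite /quadf trmx_mul !mulmxA. Qed.

Lemma quadf_gram p k (X : 'M[R]_(p, k)) v : quadf (X^T *m X) v = dot (X *m v) (X *m v).
Proof. by rewrite /quadf /dot trmx_mul !mulmxA. Qed.

Lemma posdef_neq0 k (M : 'M[R]_k) (v : 'cV[R]_k) : posdefmx M -> v != 0 -> M *m v != 0.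
Proof.
move=> PD v0; apply/eqP => Mv0; have := PD v v0.
by rewrite quadf_dot Mv0 dot0r ltxx.
Qed.


Lemma posdef_unit k (M : 'M[R]_k) : posdefmx M -> M \in unitmx.
Proof.
move=> PD; rewrite unitmxE unitfE; apply/negP => /det0P [v v0 vM].
have v0' : v^T != 0 by rewrite trmx_eq0.
have := PD _ v0'; rewrite /quadf trmxK vM mul0mx mxE ltxx.
done.
Qed.

Lemma inv_uniq k (X Y : 'M[R]_k) : X \in unitmx -> X *m Y = 1%:M -> invmx X = Y.
Proof. by move=> Xu XY; rewrite -[Y](mulKmx Xu) XY mulmx1. Qed.

Lemma posdef_inv k (M : 'M[R]_k) : M^T = M -> posdefmx M ->
  (invmx M)^T = invmx M /\ posdefmx (invmx M).
Proof.
move=> MT PD; have Mu := posdef_unit PD.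
have iT : (invmx M)^T = invmx M by rewrite trmx_inv MT.
split => // v v0.
have -> : invmx M = (invmx M)^T *m M *m invmx M by rewrite iT mulVmx // mul1mx.
rewrite quadf_conj; apply: PD.
apply: contra v0 => /eqP h; apply/eqP.
by rewrite -[v](mulKVmx Mu) h mulmx0.
Qed.

Lemma posdef_conj k (M P : 'M[R]_k) : P \in unitmx -> posdefmx M -> posdefmx (P^T *m M *m P).
Proof.
move=> Pu PD v v0; rewrite quadf_conj; apply: PD.
apply: contra v0 => /eqP h; apply/eqP.
by rewrite -[v](mulKmx Pu) h mulmx0.
Qed.

Lemma diag_sym k (L : 'M[R]_k) : is_diag_mx L -> L^T = L.
Proof.
move=> /is_diag_mxP h; apply/matrixP => i j; rewrite mxE.
have [->//|ij] := eqVneq i j.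
by rewrite !h // eq_sym.
Qed.

Lemma gram_sym p k (X : 'M[R]_(p, k)) (L : 'M[R]_k) (c : R) :
  L^T = L -> (X^T *m X + c *: L)^T = X^T *m X + c *: L.
Proof. by move=> LT; rewrite linearD /= linearZ /= trmx_mul trmxK LT. Qed.

Lemma gram_pd p k (X : 'M[R]_(p, k)) (L : 'M[R]_k) (nu : R) :
  (forall v, quadf 1%:M v <= quadf L v) -> 0 < nu ->
  posdefmx (X^T *m X + nu ^+ 2 *: L).
Proof.
move=> hL nu0 v v0; rewrite quadfD quadf_gram quadfZ.
have h1 := dot_ge0 (X *m v).
have h2 := hL v; rewrite quadf1 in h2.
have h3 : 0 < dot v v.
  rewrite lt_def dot_ge0 andbT; apply: contra v0 => /eqP h.
  by apply/eqP; apply: dot_eq0.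
have : 0 < nu ^+ 2 * quadf L v.
  by apply: mulr_gt0; [exact: exprn_gt0 | exact: lt_le_trans h3 h2].
lra.
Qed.

Lemma det_bound (n d m : nat) (A : 'M[R]_(n, d)) (b : 'cV[R]_d) (Lam : 'M[R]_d)
  (nu : R) (S : 'M[R]_(m, n)) (s : R) :
  is_diag_mx Lam -> (forall v, quadf 1%:M v <= quadf Lam v) -> 0 < nu ->
  specnorm (CSmat S A Lam nu - 1%:M) <= s ->
  forall x, `|delta_x A b Lam nu x - delta_t S A b Lam nu x|
     <= s * delta_t S A b Lam nu x.
Proof.
move=> Ld hL nu0 hs x.
have LT := diag_sym Ld.
set H := Hmat A Lam nu. set HS := HSmat S A Lam nu.
have HT : H^T = H by exact: gram_sym.
have HPD : posdefmx H by exact: gram_pd.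
have HSE : HS = (S *m A)^T *m (S *m A) + nu ^+ 2 *: Lam.
  by rewrite /HS /HSmat trmx_mul !mulmxA.
have HST : HS^T = HS by rewrite HSE; exact: gram_sym.
have HSPD : posdefmx HS by rewrite HSE; exact: gram_pd.
have Hu := posdef_unit HPD.
have [iHT iHPD] := posdef_inv HT HPD.
have [PT [PPD PP]] : (invsqrtmx H)^T = invsqrtmx H /\ posdefmx (invsqrtmx H) /\ invsqrtmx H *m invsqrtmx H = invmx H.
  have [Q [QT QPD QQ]] := sqrt_exists iHT iHPD.
  have ex : exists P : 'M[R]_d, P^T = P /\ posdefmx P /\ P *m P = invmx H by exists Q.
  exact: (epsilon_spec _ _ ex).
set P := invsqrtmx H in PT PPD PP.
have Pu := posdef_unit PPD.
set C := CSmat S A Lam nu.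
have CE : C = P^T *m HS *m P by rewrite PT.
have CT : C^T = C by rewrite CE !trmx_mul trmxK HST mulmxA.
have CPD : posdefmx C by rewrite CE; exact: posdef_conj.
have [Q [QT QPD QQ]] := sqrt_exists CT CPD.
have Qu := posdef_unit QPD.
set g := gradf A b Lam nu x.
have xE : x - xstar A b Lam nu = invmx H *m g.
  by rewrite /g /gradf mulmxBr mulKmx.
set y := invmx Q *m (P *m g).
have Py : P *m g = Q *m y by rewrite /y mulKVmx.
have dx : delta_x A b Lam nu x = 2^-1 * quadf C y.
  rewrite /delta_x -/H xE.
  have -> : quadf H (invmx H *m g) = quadf (invmx H) g.
    by rewrite -quadf_conj iHT mulVmx // mul1mx.
  by rewrite -PP -{1}PT quadf_gram Py -quadf_gram QT QQ.
have HSE2 : HS = invmx P *m C *m invmx P.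
  by rewrite CE PT !mulmxA mulVmx // mul1mx mulmxK.
have dt : delta_t S A b Lam nu x = 2^-1 * dot y y.
  rewrite /delta_t -/HS -/g.
  have -> : invmx HS = (invmx Q *m P)^T *m (invmx Q *m P).
    apply: inv_uniq; first exact: posdef_unit.
    rewrite trmx_mul PT trmx_inv QT HSE2 -QQ !mulmxA.
    by rewrite mulmxKV // !mulmxK // mulVmx.
  by rewrite quadf_gram /y mulmxA.
rewrite dx dt -mulrBr -quadf1 -quadfB normrM ger0_norm ?invr_ge0 ?ler0n // mulrCA.
apply: ler_wpM2l; first by rewrite invr_ge0 ler0n.
apply: le_trans (quad_bound _ _) _.
by rewrite quadf1; apply: ler_wpM2r; [exact: dot_ge0 | exact: hs].
Qed.

End Det.
Local Open Scope classical_set_scope.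
Local Open Scope ring_scope.

Section Prob.
Variable R : realType.

Lemma arch_lim (a rho0 : R) : 0 <= rho0 -> rho0 < 1 ->
  (forall j : nat, a <= Num.sqrt (rho0 + (1 - rho0) / (j.+2)%:R)) ->
  a <= Num.sqrt rho0.
Proof.
move=> r0 r1 h; rewrite leNgt; apply/negP => ha.
have s0 := sqrtr_ge0 rho0.
have ss : Num.sqrt rho0 * Num.sqrt rho0 = rho0 by rewrite -expr2 sqr_sqrtr.
have a0 : 0 < a by apply: le_lt_trans ha.
have epos : 0 < a ^+ 2 - rho0 by rewrite -ss expr2; nra.
set e := a ^+ 2 - rho0 in epos.
set t := (1 - rho0) / e.
set j := Num.trunc t.
have tj : t < (j.+1)%:R by apply: truncnS_gt.
have N0 : 0 < (j.+2)%:R :> R by rewrite ltr0n.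
have hf : (1 - rho0) / (j.+2)%:R < e.
  rewrite ltr_pdivrMr // -ltr_pdivrMl //.
  rewrite mulrC; apply: (lt_trans tj); rewrite ltr_nat; exact: ltnSn.
have : rho0 + (1 - rho0) / (j.+2)%:R < a ^+ 2.
  move: hf; rewrite /e; move: ((1 - rho0) / (j.+2)%:R) => q; lra.
rewrite -ltr_sqrt ?exprn_gt0 // sqrtr_sqr ger0_norm ?ltW // => hlt.
by have := h j; rewrite leNgt hlt.
Qed.

Lemma inf_facts (K : set R) (M : R) : (forall k, K k -> 1 <= k) ->
  (ereal_inf [set k%:E | k in K] < M%:E)%E ->
  exists c, [/\ ereal_inf [set k%:E | k in K] = c%:E, 1 <= c, c < M &
     forall r, c < r -> exists2 k, K k & k < r].
Proof.
move=> K1 hlt.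
have lb : (1%:E <= ereal_inf [set k%:E | k in K])%E.
  by apply: le_ereal_inf_tmp => _ [k Kk <-]; rewrite lee_fin K1.
move: lb hlt; case E : (ereal_inf _) => [c| |] //= lb hlt.
exists c; split => //.
move=> r cr.
have : (ereal_inf [set k%:E | k in K] < r%:E)%E by rewrite E lte_fin.
by move/ereal_inf_lt => [_ [k Kk <-]] kr; exists k => //; rewrite -lte_fin.
Qed.

Lemma evE m n d (S : 'M[R]_(m, n)) (A : 'M[R]_(n, d)) Lam nu r : 0 < r -> r < 1 ->
  eventE S A Lam nu r <-> specnorm (CSmat S A Lam nu - 1%:M) <= Num.sqrt r.
Proof.
move=> r0 r1; rewrite /eventE max_l //.
have s0 := sqrtr_ge0 r.
have ss : Num.sqrt r * Num.sqrt r = r by rewrite -expr2 sqr_sqrtr // ltW.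
have s1 : Num.sqrt r <= 1 by rewrite -sqrtr1 ler_wsqrtr // ltW.
rewrite -{1}ss; nra.
Qed.

End Prob.

Theorem lemma2p1 (R : realType) (n d : nat) (A : 'M[R]_(n, d))
  (b : 'cV[R]_d) (Lam : 'M[R]_d) (nu : R) :
  (d <= n)%N ->
  is_diag_mx Lam ->
  (forall v : 'cV[R]_d, quadf 1%:M v <= quadf Lam v) ->
  0 < nu ->
  (* deterministic part *)
  (forall (m : nat) (S : 'M[R]_(m, n)) (rho : R),
     0 < rho < 1 ->
     eventE S A Lam nu rho ->
     forall x : 'cV[R]_d,
       `|delta_x A b Lam nu x - delta_t S A b Lam nu x|
         <= Num.sqrt rho * delta_t S A b Lam nu x)
  /\
  (* probabilistic consequence for a random embedding *)
  (forall (d0 : measure_display) (Omega : measurableType d0)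
          (P : probability Omega R) (S : forall m : nat, Omega -> 'M[R]_(m, n)),
     (forall (m : nat) (rho : R), 0 < rho ->
        measurable [set w | eventE (S m w) A Lam nu rho]) ->
     forall delta : R, 0 < delta < 1 ->
     forall m : nat, (crit_size A Lam nu P S delta < m%:R%:E)%E ->
     exists F : set Omega,
       [/\ measurable F,
           ((1 - delta)%:E <= P F)%E &
           forall w, F w -> forall x : 'cV[R]_d,
             `|delta_x A b Lam nu x - delta_t (S m w) A b Lam nu x|
               <= Num.sqrt (fine (crit_size A Lam nu P S delta) / m%:R)
                  * delta_t (S m w) A b Lam nu x]).
Proof.
move=> dn Ld hL nu0; split.
  move=> m S rho /andP[r0 r1] hE x.
  by apply: det_bound => //; apply/evE.
move=> d0 Omega P S Smeas delta /andP[dl0 dl1] m hcrit.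
move: hcrit; rewrite /crit_size => hcrit.
have [c [cE c1 cm hK]] := inf_facts (fun k (h : _ /\ _) => proj1 h) hcrit.
rewrite cE /=.
have m0 : (0 < m)%N by rewrite -(ltr0n R); apply: lt_trans cm; lra.
have mR0 : 0 < m%:R :> R by rewrite ltr0n.
set rho0 := c / m%:R.
have rho0p : 0 < rho0 by apply: divr_gt0 => //; lra.
have rho01 : rho0 < 1 by rewrite ltr_pdivrMr // mul1r.
pose r (j : nat) := rho0 + (1 - rho0) / (j.+2)%:R.
have rgt : forall j, rho0 < r j.
  move=> j; rewrite /r ltrDl; apply: divr_gt0; [lra | by rewrite ltr0n].
have rlt : forall j, r j < 1.
  move=> j; rewrite /r.
  have : (1 - rho0) / (j.+2)%:R < 1 - rho0.
    rewrite ltr_pdivrMr ?ltr0n // ltr_pMr; last lra.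
    by rewrite ltr1n.
  move: ((1 - rho0) / (j.+2)%:R) => q; lra.
have rpos : forall j, 0 < r j by move=> j; exact: lt_trans (rgt j).
have rdec : forall j k, (j <= k)%N -> r k <= r j.
  move=> j k jk; rewrite /r lerD2l; apply: ler_wpM2l; first lra.
  rewrite lef_pV2 ?posrE ?ltr0n // ler_nat; by rewrite ltnS ltnS.
pose E (j : nat) := [set w | eventE (S m w) A Lam nu (r j)].
have Emeas : forall j, measurable (E j).
  move=> j; apply: Smeas; exact: lt_trans (rgt j).
have PE : forall j, ((1 - delta)%:E <= P (E j))%E.
  move=> j.
  have ckr : c < r j * m%:R by rewrite -ltr_pdivrMr.
  have [k [k1 Kk] kr] := hK _ ckr.
  apply: Kk => //.
  by rewrite ler_pdivrMr ?(lt_trans rho0p (rgt j)) // mulrC; apply: ltW.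
pose F := \bigcap_j E j.
have Fmeas : measurable F by apply: bigcapT_measurable.
have cv : (P \o E) x @[x --> \oo] --> P F.
  apply: nonincreasing_cvg_mu => //.
    by apply: (le_lt_trans (probability_le1 P (Emeas 0%N))); exact: ltey.
  move=> j k jk; apply/subsetPset => w; rewrite /E /= !evE ?rpos ?rlt //.
  move=> h; apply: (le_trans h); apply: ler_wsqrtr; exact: rdec.
exists F; split => //.
  have h1 : ((1 - delta)%:E <= lim ((P \o E) x @[x --> \oo]))%E.
    apply: lime_ge; first exact: (cvgP _ cv).
    by apply: nearW => j; exact: PE.
  by rewrite (cvg_lim _ cv) in h1.
move=> w Fw x; apply: det_bound => //.
apply: arch_lim; [exact: ltW | exact: rho01 | ].
move=> j; have := Fw j I; rewrite /E /= evE ?rpos ?rlt //.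
Qed.
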